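(* Suppose every class $c\in[C]$ uses a revision protocol $\rho^c$ that is either imitative via comparison, excess payoff, or pairwise comparison (different classes may use different families). Let $\mu^\star\in X$ be a rest point of the evolutionary dynamics (E). If $\mu^\star$ is not an MSNE, then $\mu^\star$ is not Lyapunov stable under (E), and no solution of (E) with initial condition $\mu(0)$ in the relative interior of $X$ (i.e. $\mu^c[s,u](0)>0$ for all $c,s,u$) converges to $\mu^\star$.
   Context: Setting. There are $C$ classes of players, $[C]=\{1,\dots,C\}$. For each class $c\in[C]$: $\mathcal S^c$ is a finite state set with $p^c$ elements; for each $s\in\mathcal S^c$, $\mathcal A^c(s)$ is a nonempty finite action set; $\phi^c(\cdot\mid s,a)$ is a probability distribution on $\mathcal S^c$ for each $s\in\mathcal S^c$, $a\in\mathcal A^c(s)$; $\mathcal U^c_D$ is a finite set of $n^c$ deterministic stationary policies, each $u\in\mathcal U^c_D$ assigning to every $s$ a point mass $u(\cdot\mid s)$ on some action of $\mathcal A^c(s)$; $m^c>0$ is the mass of class $c$; $R^c_d>0$ is the state-transition rate. Let $n=\sum_c n^c$. For $u\in\mathcal U^c_D$ put $\phi^{c,u}(s\mid s')=\sum_{a'\in\mathcal A^c(s')}\phi^c(s\mid s',a')u(a'\mid s')$; standing assumption: the Markov chain on $\mathcal S^c$ with kernel $\phi^{c,u}$ has a unique recurrent communicating class, hence a unique stationary distribution $\eta^{c,u}$. The population state is $\mu=(\mu^c)_{c\in[C]}\in X:=\prod_c X^c$, where $X^c=\{\mu^c\in\mathbb R_{\ge0}^{\mathcal S^c\times\mathcal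 U^c_D}:\sum_{s,u}\mu^c[s,u]=m^c\}$; write $\mu^c[\mathcal S^c,u]:=\sum_{s\in\mathcal S^c}\mu^c[s,u]$ and $\mu^c[\mathcal S^c,\cdot]\in\mathbb R^{n^c}_{\ge0}$ for the vector of these. A payoff map $F=(F^c)_{c\in[C]}$ is given, with $F^c$ continuously differentiable on an open neighborhood of $X$ and valued in $\mathbb R^{\mathcal U^c_D}$ ($F^c_u(\mu)$ is the payoff of policy $u$ for class $c$). Each class has a revision protocol $\rho^c=(\rho^c_{uv})_{u,v\in\mathcal U^c_D}$, a Lipschitz continuous map $\mathbb R^{n^c}\times\mathbb R^{n^c}_{\ge0}\to\mathbb R^{n^c\times n^c}_{\ge0}$ whose first argument is a payoff vector and second a policy distribution. The evolutionary dynamics (E) are the ODE on $X$: for all $c\in[C]$, $s\in\mathcal S^c$, $u\in\mathcal U^c_D$, $\dot\mu^c[s,u]=f^{c,d}_{s,u}(\mu)+f^{c,r}_{s,u}(\mu)$, where $f^{c,d}_{s,u}(\mu)=R^c_d\sum_{s'\in\mathcal S^c}\sum_{a'\in\mathcal A^c(s')}\phi^c(s\mid s',a')u(a'\mid s')\mu^c[s',u]-R^c_d\mu^c[s,u]$ and $f^{c,r}_{s,u}(\mu)=\sum_{u'\in\mathcal U^c_D}\mu^c[s,u']\rho^c_{u'u}(F^c(\mu),\mu^c[\mathcal S^c,\cdot])-\mu^c[s,u]\sum_{u'\in\mathcal U^c_D}\rho^c_{uu'}(F^c(\mu),\mu^c[\mathcal S^c,\cdot])$. Solutions from $X$ exist,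 are unique and remain in $X$. A state $\mu\in X$ is a mixed stationary Nash equilibrium (MSNE) if for every $c\in[C]$: (a) for all $u\in\mathcal U^c_D$, $\mu^c[\mathcal S^c,u]>0\Rightarrow F^c_u(\mu)\ge F^c_v(\mu)$ for all $v\in\mathcal U^c_D$; and (b) $f^{c,d}_{s,u}(\mu)=0$ for all $s\in\mathcal S^c,u\in\mathcal U^c_D$. $\mathrm{MSNE}(F,\phi)$ denotes the set of MSNE. Protocol families (for class $c$; $\pi\in\mathbb R^{n^c}$ a payoff vector, $x\in\mathbb R^{n^c}_{\ge0}$ a policy distribution of total mass $m^c$): - imitative: $\rho^c_{uv}(\pi,x)=\frac{x_v}{m^c}r^c_{uv}(\pi,x)$ with $r^c\ge0$ Lipschitz and monotone net conditional imitation rates: for all $u,v,w$, $\pi_v\ge\pi_u\iff r^c_{wv}(\pi,x)-r^c_{vw}(\pi,x)\ge r^c_{wu}(\pi,x)-r^c_{uw}(\pi,x)$; - imitative via comparison: an imitative protocol with $r^c_{uv}(\pi,x)=\varphi^c(\pi_v-\pi_u)$, where $\varphi^c$ is Lipschitz, $\varphi^c(d)=0$ for $d\le0$ and $\varphi^c(d)>0$ for $d>0$; - excess payoff: $\rho^c_{uv}(\pi,x)=\tau^c_v(\hat\pi)$ with $\hat\pi_v=\pi_v-\frac1{m^c}\sum_w x_w\pi_w$, $\tau^c:\mathbb R^{n^c}\to\mathbb R^{n^c}_{\ge0}$ Lipschitz and $\tau^c(\hat\pi)^\top\hat\pi>0$ whenever $\hat\pi$ has a positive component; it is separable if $\tau^c_v(\hat\pi)=\tau^c_v(\hat\pi_v)$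 depends only on $\hat\pi_v$, with $\tau^c_v(d)>0\iff d>0$; - pairwise comparison: $\rho^c_{uv}(\pi,x)=\rho^c_{uv}(\pi)$ independent of $x$, Lipschitz, with $\rho^c_{uv}(\pi)>0\iff\pi_v>\pi_u$; it is impartial if $\rho^c_{uv}(\pi)=\varphi^c_v(\pi_v-\pi_u)$ for some functions $\varphi^c_v$. *)

(* Defs.v *)
From HB Require Import structures.
From mathcomp Require Import all_boot all_order all_algebra.
From mathcomp Require Import all_classical all_reals all_analysis.
Unset Printing Implicit Defensive.
Import Order.TTheory GRing.Theory Num.Theory.
Import numFieldNormedType.Exports.
Local Open Scope ring_scope.

Definition SU {C : nat} (St Pol : 'I_C -> finType) (c : 'I_C) : finType :=
  (St c * Pol c)%type.
Definition Idx {C : nat} (St Pol : 'I_C -> finType) : finType :=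
  {c : 'I_C & SU St Pol c}.

(* The data of the model.
   - [phi c s' a s]   is  phi^c(s | s', a);
   - [pol c u s]      is the action prescribed by the deterministic policy u
                      at state s (u(.|s) is the point mass on it);
   - [F c mu u]       is F^c_u(mu), for a population state mu : Idx -> R;
   - [rho c pi x u v] is rho^c_{uv}(pi, x). *)
Record model (R : realType) := Model {
  C : nat;
  St : 'I_C -> finType;
  Pol : 'I_C -> finType;
  Act : forall c, St c -> finType;
  phi : forall c (s' : St c), Act c s' -> St c -> R;
  pol : forall c, Pol c -> forall s : St c, Act c s;
  mass : 'I_C -> R;
  Rd : 'I_C -> R;
  F : forall c, (Idx St Pol -> R) -> Pol c -> R;
  rho : forall c, (Pol c -> R) -> (Pol c -> R) -> Pol c -> Pol c -> R
}.
Arguments C {R} M : rename.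
Arguments St {R} M c : rename.
Arguments Pol {R} M c : rename.
Arguments Act {R M c} s : rename.
Arguments phi {R M c s'} a s : rename.
Arguments pol {R M c} u s : rename.
Arguments mass {R} M c : rename.
Arguments Rd {R} M c : rename.
Arguments F {R} M c mu u : rename.
Arguments rho {R} M c pi x u v : rename.

Section Model.
Context {R : realType} (M : model R).

Definition state := Idx (St M) (Pol M) -> R.

Definition idx {c} (s : St M c) (u : Pol M c) : Idx (St M) (Pol M) :=
  existT (fun c => SU (St M) (Pol M) c) c (s, u).

Definition mu_at (mu : state) {c} (s : St M c) (u : Pol M c) : R := mu (idx s u).

Definition polmass (mu : state) c : Pol M c -> R :=
  fun u => \sum_(s : St M c) mu_at mu s u.

Definition inX (mu : state) : Prop :=
  (forall i, 0 <= mu i) /\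
  (forall c, \sum_(s : St M c) \sum_(u : Pol M c) mu_at mu s u = mass M c).

Definition interiorX (mu : state) : Prop := inX mu /\ forall i, 0 < mu i.

Definition polprob {c} (u : Pol M c) {s' : St M c} (a' : Act s') : R :=
  (a' == pol u s')%:R.

Definition kernel {c} (u : Pol M c) (s' s : St M c) : R :=
  \sum_(a' : Act s') phi a' s * polprob u a'.

Definition fd (mu : state) {c} (s : St M c) (u : Pol M c) : R :=
  Rd M c * (\sum_(s' : St M c) \sum_(a' : Act s')
              phi a' s * polprob u a' * mu_at mu s' u)
  - Rd M c * mu_at mu s u.

Definition fr (mu : state) {c} (s : St M c) (u : Pol M c) : R :=
  \sum_(u' : Pol M c) mu_at mu s u' * rho M c (F M c mu) (polmass mu c) u' u
  - mu_at mu s u * \sum_(u' : Pol M c) rho M c (F M c mu) (polmass mu c) u u'.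

Definition field (mu : state) (i : Idx (St M) (Pol M)) : R :=
  fd mu (tagged i).1 (tagged i).2 + fr mu (tagged i).1 (tagged i).2.

Definition close (mu nu : state) (e : R) : Prop := forall i, `|mu i - nu i| < e.

Definition solution (x : R -> state) : Prop :=
  (forall t : R, 0 <= t -> inX (x t)) /\
  (forall t : R, 0 < t -> forall i, is_derive t (1 : R) (fun r => x r i) (field (x t) i)) /\
  (forall e, 0 < e -> exists d, 0 < d /\
     forall t, 0 <= t -> t < d -> close (x t) (x 0) e).

Definition rest_point (mu : state) : Prop :=
  inX mu /\ forall i, field mu i = 0.

Definition MSNE (mu : state) : Prop :=
  inX mu /\
  forall c,
    (forall u, 0 < polmass mu c u -> forall v, F M c mu v <= F M c mu u) /\
    (forall (s : St M c) (u : Pol M c), fd mu s u = 0).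

Definition lyapunov_stable (mu : state) : Prop :=
  forall e, 0 < e -> exists d, 0 < d /\
    forall x, solution x -> close (x 0) mu d ->
      forall t, 0 <= t -> close (x t) mu e.

Definition converges_to (x : R -> state) (mu : state) : Prop :=
  forall e, 0 < e -> exists T, forall t, T <= t -> close (x t) mu e.

Definition shift (mu : state) (i : Idx (St M) (Pol M)) (h : R) : state :=
  fun j => mu j + h * (j == i)%:R.

Definition partial (G : state -> R) (mu : state) i : R :=
  'D_1 (fun h : R => G (shift mu i h)) 0.

Definition open_set (O : state -> Prop) : Prop :=
  forall mu, O mu -> exists d, 0 < d /\ forall nu, close nu mu d -> O nu.

Definition C1_on (O : state -> Prop) (G : state -> R) : Prop :=
  forall i,
    (forall mu, O mu -> derivable (fun h : R => G (shift mu i h)) 0 1) /\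
    (forall mu, O mu -> forall e, 0 < e -> exists d, 0 < d /\
       forall nu, O nu -> close nu mu d -> `|partial G nu i - partial G mu i| < e).

Definition F_C1_near_X : Prop :=
  exists O, open_set O /\ (forall mu, inX mu -> O mu) /\
    forall c (u : Pol M c), C1_on O (fun mu => F M c mu u).

Definition reach {c} (u : Pol M c) : rel (St M c) :=
  connect [rel s' s | 0 < kernel u s' s].

Definition recurrent {c} (u : Pol M c) (s : St M c) : Prop :=
  forall t, reach u s t -> reach u t s.

Definition unique_recurrent_class {c} (u : Pol M c) : Prop :=
  (exists s, recurrent u s) /\
  forall s t, recurrent u s -> recurrent u t -> reach u s t.

Definition standing : Prop :=
  (forall c (s : St M c), (0 < #|Act s|)%N) /\
  (forall c (s' : St M c) (a : Act s') s, 0 <= phi a s) /\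
  (forall c (s' : St M c) (a : Act s'), \sum_(s : St M c) phi a s = 1) /\
  (forall c (u v : Pol M c), (forall s, pol u s = pol v s) -> u = v) /\
  (forall c, 0 < mass M c) /\
  (forall c, 0 < Rd M c) /\
  (forall c (u : Pol M c), unique_recurrent_class u) /\
  F_C1_near_X.

Definition well_posed : Prop :=
  (forall mu0, inX mu0 -> exists x, solution x /\ x 0 = mu0) /\
  (forall x y, solution x -> solution y -> x 0 = y 0 ->
     forall t, 0 <= t -> x t = y t).

End Model.

Section Protocols.
Context {R : realType} {U : finType}.

Definition nonneg (x : U -> R) : Prop := forall u, 0 <= x u.

Definition l1dist (a b : U -> R) : R := \sum_(u : U) `|a u - b u|.

Definition mat_lipschitz (r : (U -> R) -> (U -> R) -> U -> U -> R) : Prop :=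
  exists L : R, forall pi pi' x x', nonneg x -> nonneg x' -> forall u v,
    `|r pi x u v - r pi' x' u v| <= L * (l1dist pi pi' + l1dist x x').

Definition revision_protocol (rho : (U -> R) -> (U -> R) -> U -> U -> R) : Prop :=
  mat_lipschitz rho /\
  forall pi x, nonneg x -> forall u v, 0 <= rho pi x u v.

Definition pdist (m : R) (x : U -> R) : Prop := nonneg x /\ \sum_(u : U) x u = m.

Definition imitative_with (m : R) (rho r : (U -> R) -> (U -> R) -> U -> U -> R) : Prop :=
  (forall pi x, nonneg x -> forall u v, 0 <= r pi x u v) /\
  mat_lipschitz r /\
  (forall pi x, pdist m x -> forall u v, rho pi x u v = x v / m * r pi x u v) /\
  (forall pi x, pdist m x -> forall u v w,
     pi u <= pi v <-> r pi x w u - r pi x u w <= r pi x w v - r pi x v w).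

Definition imitative (m : R) rho : Prop := exists r, imitative_with m rho r.

Definition real_lipschitz (f : R -> R) : Prop :=
  exists L : R, forall a b, `|f a - f b| <= L * `|a - b|.

Definition imitative_via_comparison (m : R) rho : Prop :=
  exists varphi : R -> R,
    real_lipschitz varphi /\
    (forall d, d <= 0 -> varphi d = 0) /\
    (forall d, 0 < d -> 0 < varphi d) /\
    imitative_with m rho (fun pi _ u v => varphi (pi v - pi u)).

Definition excess_payoff (m : R) (rho : (U -> R) -> (U -> R) -> U -> U -> R) : Prop :=
  exists tau : (U -> R) -> U -> R,
    (exists L : R, forall p q v, `|tau p v - tau q v| <= L * l1dist p q) /\
    (forall p v, 0 <= tau p v) /\
    (forall p, (exists v, 0 < p v) -> 0 < \sum_(v : U) tau p v * p v) /\
    (forall pi x, pdist m x -> forall u v,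
       rho pi x u v = tau (fun w => pi w - (\sum_(w' : U) x w' * pi w') / m) v).

Definition pairwise_comparison (rho : (U -> R) -> (U -> R) -> U -> U -> R) : Prop :=
  (forall pi x y, nonneg x -> nonneg y -> forall u v, rho pi x u v = rho pi y u v) /\
  (forall pi x, nonneg x -> forall u v, 0 < rho pi x u v <-> pi u < pi v).

End Protocols.

(* Main.v *)
Require Import Defs.
From HB Require Import structures.
From mathcomp Require Import all_boot all_order all_algebra.
From mathcomp Require Import all_classical all_reals all_analysis.
Import Order.TTheory GRing.Theory Num.Theory.
Local Open Scope ring_scope.
From mathcomp Require Import ring lra.
Import numFieldNormedType.Exports.
Section A.
Context {R : realType} (M : model R).

Lemma sum_polprob c (u : Pol M c) (s' : St M c) :
  \sum_(a : Act s') polprob M u a = 1.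
Proof.
rewrite (bigD1 (pol u s')) //= /polprob eqxx big1 ?addr0 // => a /negbTE ->.
by [].
Qed.

Lemma sum_fd (mu : state M) c (u : Pol M c) :
  (forall (s' : St M c) (a : Act s'), \sum_(s : St M c) phi a s = 1) ->
  \sum_(s : St M c) fd M mu s u = 0.
Proof.
move=> hphi; rewrite /fd sumrB -!mulr_sumr; apply/eqP; rewrite subr_eq0; apply/eqP.
congr (_ * _).
rewrite exchange_big /= /polmass; apply: eq_bigr => s' _.
rewrite exchange_big /=.
transitivity (\sum_(a : Act s') polprob M u a * mu_at M mu s' u).
  apply: eq_bigr => a _; rewrite -!mulr_suml hphi mul1r //.
by rewrite -mulr_suml sum_polprob mul1r.
Qed.

Lemma sum_fr (mu : state M) c (u : Pol M c) :
  \sum_(s : St M c) fr M mu s u =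
  \sum_(u' : Pol M c) polmass M mu c u' * rho M c (F M c mu) (polmass M mu c) u' u
  - polmass M mu c u * \sum_(u' : Pol M c) rho M c (F M c mu) (polmass M mu c) u u'.
Proof.
rewrite /fr sumrB; congr (_ - _).
  rewrite exchange_big /=; apply: eq_bigr => u' _; by rewrite mulr_suml.
by rewrite /polmass mulr_suml.
Qed.

Lemma polmass_ge0 (mu : state M) c u : inX M mu -> 0 <= polmass M mu c u.
Proof. by move=> [h _]; apply: sumr_ge0 => s _; apply: h. Qed.

Lemma mu_le_polmass (mu : state M) c (s : St M c) u : inX M mu ->
  mu_at M mu s u <= polmass M mu c u.
Proof.
move=> [h _]; rewrite /polmass (bigD1 s) //= lerDl.
by apply: sumr_ge0 => ? _; apply: h.
Qed.

Lemma polmass0 (mu : state M) c (s : St M c) u : inX M mu ->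
  polmass M mu c u = 0 -> mu_at M mu s u = 0.
Proof.
move=> hX h0; apply/eqP; rewrite eq_le; apply/andP; split.
  by rewrite -h0 mu_le_polmass.
by case: hX => h _; apply: h.
Qed.

Lemma polmass_pdist (mu : state M) c : inX M mu ->
  pdist (mass M c) (polmass M mu c).
Proof.
move=> hX; split; first by move=> u; apply: polmass_ge0.
case: hX => _ h; rewrite -h /polmass exchange_big //.
Qed.

End A.
Section B.
Context {R : realType} {S U : finType} (m : R) (mu : S -> U -> R)
  (x pi : U -> R) (rh : U -> U -> R).
Hypothesis m_gt0 : 0 < m.
Hypothesis mu_ge0 : forall s u, 0 <= mu s u.
Hypothesis mu_le : forall s u, mu s u <= x u.
Hypothesis x_ge0 : forall u, 0 <= x u.
Hypothesis x_sum : \sum_u x u = m.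
Hypothesis agg : forall u,
  \sum_u' x u' * rh u' u - x u * \sum_u' rh u u' = 0.

Definition frg s u := \sum_u' mu s u' * rh u' u - mu s u * \sum_u' rh u u'.

Lemma mu0 s u : x u = 0 -> mu s u = 0.
Proof. by move=> h; apply/eqP; rewrite eq_le mu_ge0 -h mu_le. Qed.

Lemma x_cases u : x u = 0 \/ 0 < x u.
Proof. by move: (x_ge0 u); rewrite le0r => /orP[/eqP|]; auto. Qed.

Lemma exists_used : exists u, 0 < x u.
Proof.
case: (pickP (fun u => 0 < x u)) => [u hu|h]; first by exists u.
have : \sum_u x u <= 0.
  by apply: sumr_le0 => u _; rewrite leNgt h.
by rewrite x_sum => h'; move: (lt_le_trans m_gt0 h'); rewrite ltxx.
Qed.

Lemma pairwise_gen :
  (forall u v, 0 <= rh u v) ->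
  (forall u v, 0 < rh u v <-> pi u < pi v) ->
  (forall u, 0 < x u -> forall v, pi v <= pi u) /\ (forall s u, frg s u = 0).
Proof.
move=> rh0 rhP.
have rh_eq0 u v : pi v <= pi u -> rh u v = 0.
  move=> h; apply/eqP; rewrite eq_le rh0 andbT leNgt; apply/negP.
  by move=> /rhP; rewrite ltNge h.
have nash : forall u, 0 < x u -> forall v, pi v <= pi u.
  move=> u xu v; rewrite leNgt; apply/negP => hlt.
  have [umin humin hmin] := @arg_minP _ _ _ u (fun i => 0 < x i) pi xu.
  have h1 : \sum_u' x u' * rh u' umin = 0.
    apply: big1 => u' _; case: (x_cases u') => [->|hu']; first by rewrite mul0r.
    by rewrite rh_eq0 ?mulr0 // hmin.
  have := agg umin; rewrite h1 sub0r => /eqP; rewrite oppr_eq0 mulf_eq0.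
  rewrite (gt_eqF humin) /= => /eqP hs.
  have := @psumr_eq0P _ _ predT (fun u' => rh umin u') (fun i _ => rh0 _ _) hs v isT.
  have : 0 < rh umin v by apply/rhP; apply: le_lt_trans hlt; apply: hmin.
  by move=> /gt_eqF /eqP.
split=> // s u; rewrite /frg.
rewrite big1 ?sub0r; last first.
  move=> u' _; case: (x_cases u') => [/(mu0 s) ->|hu']; first by rewrite mul0r.
  by rewrite rh_eq0 ?mulr0 // nash.
case: (x_cases u) => [/(mu0 s) ->|hu]; first by rewrite mul0r oppr0.
by rewrite big1 ?mulr0 ?oppr0 // => u' _; rewrite rh_eq0 // nash.
Qed.

Lemma imit_gen (vp : R -> R) :
  (forall d, d <= 0 -> vp d = 0) -> (forall d, 0 < d -> 0 < vp d) ->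
  (forall u' u, rh u' u = x u / m * vp (pi u - pi u')) ->
  (forall u u', 0 < x u -> 0 < x u' -> pi u = pi u') /\ (forall s u, frg s u = 0).
Proof.
move=> vp0 vpP hrh.
have vp_ge0 d : 0 <= d -> 0 <= vp d.
  by rewrite le0r => /orP[/eqP->|/vpP/ltW//]; rewrite vp0.
have aggE u : \sum_u' x u' * rh u' u - x u * \sum_u' rh u u' =
    x u / m * \sum_u' x u' * (vp (pi u - pi u') - vp (pi u' - pi u)).
  rewrite mulr_sumr mulr_sumr -sumrB; apply: eq_bigr => u' _; rewrite !hrh.
  by rewrite /=; ring.
have [u0 hu0] := exists_used.
have [vm hvm hmax] := @arg_maxP _ _ _ u0 (fun i => 0 < x i) pi hu0.
have {}hmax j : 0 < x j -> pi j <= pi vm by move=> hj; exact: hmax.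
have eqmax u : 0 < x u -> pi u = pi vm.
  move=> hu; apply/eqP; rewrite eq_le (hmax _ hu) /=.
  have := agg vm; rewrite aggE => /eqP; rewrite mulf_eq0 => /orP[|/eqP hs].
    by rewrite mulf_eq0 invr_eq0 (gt_eqF hvm) (gt_eqF m_gt0).
  have ge0 : forall u', predT u' ->
      0 <= x u' * (vp (pi vm - pi u') - vp (pi u' - pi vm)).
    move=> u' _; case: (x_cases u') => [->|hu']; first by rewrite mul0r.
    rewrite mulr_ge0 // (vp0 (pi u' - pi vm)); last by rewrite subr_le0; exact: hmax.
    by rewrite subr0 vp_ge0 // subr_ge0; exact: hmax.
  have := psumr_eq0P ge0 hs (isT : predT u).
  move/eqP; rewrite mulf_eq0 (gt_eqF hu) /= (vp0 (pi u - pi vm)); last first.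
    by rewrite subr_le0; exact: hmax.
  rewrite subr0 => /eqP h; rewrite leNgt; apply/negP => hlt.
  by have := vpP (pi vm - pi u); rewrite subr_gt0 h ltxx => /(_ hlt).
have eqp u u' : 0 < x u -> 0 < x u' -> pi u = pi u'.
  by move=> h1 h2; rewrite (eqmax _ h1) (eqmax _ h2).
split=> // s u; rewrite /frg.
rewrite big1 ?sub0r; last first.
  move=> u' _; case: (x_cases u') => [/(mu0 s) ->|hu']; first by rewrite mul0r.
  rewrite hrh; case: (x_cases u) => [->|hu]; first by rewrite !mul0r mulr0.
  by rewrite (eqp u u') // subrr vp0 // !mulr0.
case: (x_cases u) => [/(mu0 s) ->|hu]; first by rewrite mul0r oppr0.
rewrite big1 ?mulr0 ?oppr0 // => u' _; rewrite hrh.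
case: (x_cases u') => [->|hu']; first by rewrite !mul0r.
by rewrite (eqp u u') // subrr vp0 // !mulr0.
Qed.

Lemma sum_ind1 (k : U) : \sum_w `|(w == k)%:R| = 1 :> R.
Proof.
under eq_bigr do rewrite normr_nat.
rewrite (bigD1 k) //= eqxx big1 ?addr0 // => w /negbTE -> //.
Qed.

Lemma sum_ind (f : U -> R) (k : U) : \sum_w f w * (w == k)%:R = f k.
Proof.
rewrite (bigD1 k) //= eqxx mulr1 big1 ?addr0 // => w /negbTE ->; by rewrite mulr0.
Qed.

Lemma excess_gen (tau : (U -> R) -> U -> R) :
  (exists L : R, forall p q v, `|tau p v - tau q v| <= L * l1dist p q) ->
  (forall p v, 0 <= tau p v) ->
  (forall p, (exists v, 0 < p v) -> 0 < \sum_v tau p v * p v) ->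
  (forall u v, rh u v = tau (fun w => pi w - (\sum_w' x w' * pi w') / m) v) ->
  (forall u, 0 < x u -> forall v, pi v <= pi u) /\ (forall s u, frg s u = 0).
Proof.
move=> [L hL] tau0 acute hrh.
set p := (fun w => pi w - (\sum_w' x w' * pi w') / m).
set T := \sum_v tau p v.
have hrhE : rh = (fun _ v => tau p v).
  by apply/funext => u; apply/funext => v; apply: hrh.
have aggE u : m * tau p u = x u * T.
  have := agg u; rewrite hrhE /= -mulr_suml x_sum => /eqP; rewrite subr_eq0 => /eqP.
  by rewrite mulrC.
have T0 : 0 <= T by apply: sumr_ge0 => v _; apply: tau0.
have sxp : \sum_u x u * p u = 0.
  rewrite /p; under eq_bigr do rewrite mulrBr.
  by rewrite sumrB -mulr_suml x_sum mulrC divfK ?subrr // gt_eqF.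
have pneg w : p w <= 0.
  rewrite leNgt; apply/negP => hw.
  have := acute p (ex_intro _ w hw).
  have -> : \sum_v tau p v * p v = 0.
    apply: (mulfI (negbT (gt_eqF m_gt0))); rewrite mulr0 mulr_sumr.
    under eq_bigr do rewrite mulrA aggE.
    transitivity (T * \sum_u x u * p u); last by rewrite sxp mulr0.
    by rewrite mulr_sumr; apply: eq_bigr => v _; ring.
  by rewrite ltxx.
have pused u : 0 < x u -> p u = 0.
  move=> hu.
  have ge0 : forall u', predT u' -> 0 <= - (x u' * p u').
    by move=> u' _; rewrite oppr_ge0 mulr_ge0_le0.
  have hs : \sum_u' - (x u' * p u') = 0 by rewrite sumrN sxp oppr0.
  have := psumr_eq0P ge0 hs (isT : predT u).
  by move/eqP; rewrite oppr_eq0 mulf_eq0 (gt_eqF hu) /= => /eqP.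
have nash u : 0 < x u -> forall v, pi v <= pi u.
  move=> hu v; have := pneg v; have := pused u hu; rewrite /p => h1 h2; lra.
split=> //.
have conc j k : j != k -> 0 < tau p j -> 0 < tau p k -> False.
  move=> jk ha hb.
  set a := tau p j in ha *; set b := tau p k in hb *.
  have Tpos : 0 < T.
    by rewrite /T (bigD1 j) //= ltr_wpDr // sumr_ge0 // => v _; apply: tau0.
  have xpos w : 0 < tau p w -> 0 < x w.
    move=> hw; case: (x_cases w) => // hx0; move: (aggE w); rewrite hx0 mul0r.
    by move/eqP; rewrite mulf_eq0 (gt_eqF m_gt0) (gt_eqF hw).
  have pj : p j = 0 by apply: pused; apply: xpos.
  have pk : p k = 0 by apply: pused; apply: xpos.
  set L' := `|L| + 1.
  have L'0 : 0 < L' by rewrite /L'; apply: (le_lt_trans (normr_ge0 L)); rewrite ltrDl ltr01.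
  set dl := a / (4 * L').
  set ep := dl * a / (4 * (a + b)).
  have dl0 : 0 < dl by apply: divr_gt0 => //; apply: mulr_gt0 => //.
  have ab0 : 0 < a + b by lra.
  have ep0 : 0 < ep.
    by apply: divr_gt0; [apply: mulr_gt0|apply: mulr_gt0 => //; lra].
  set q := fun w => p w + ep * (w == k)%:R - dl * (w == j)%:R.
  have qk : q k = ep by rewrite /q pk eqxx eq_sym (negbTE jk) mulr0 subr0 add0r mulr1.
  have hq := acute q (ex_intro _ k (eq_ind_r (fun z => 0 < z) ep0 qk)).
  have split_q : \sum_v tau q v * q v =
      \sum_v tau q v * p v + ep * tau q k - dl * tau q j.
    rewrite /q; under eq_bigr do rewrite mulrBr mulrDr.
    rewrite sumrB big_split /=.
    congr (_ + _ - _).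
      by under eq_bigr do rewrite mulrCA; rewrite -mulr_sumr sum_ind.
    by under eq_bigr do rewrite mulrCA; rewrite -mulr_sumr sum_ind.
  have sp : \sum_v tau q v * p v <= 0.
    by apply: sumr_le0 => v _; apply: mulr_ge0_le0.
  have l1 : l1dist q p <= ep + dl.
    have e w : q w - p w = ep * (w == k)%:R - dl * (w == j)%:R by rewrite /q; ring.
    rewrite /l1dist; under eq_bigr do rewrite e.
    apply: le_trans (ler_sum _ (fun w _ => ler_normB _ _)) _.
    rewrite big_split /=.
    under eq_bigr do rewrite normrM (gtr0_norm ep0).
    under [X in _ + X <= _]eq_bigr do rewrite normrM (gtr0_norm dl0).
    by rewrite -!mulr_sumr !sum_ind1 !mulr1.
  have l10 : 0 <= l1dist q p by apply: sumr_ge0 => w _.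
  have lip w : `|tau q w - tau p w| <= L' * (ep + dl).
    apply: le_trans (hL q p w) _.
    have := ler_norm L; have := normr_ge0 L; rewrite /L' => h1 h2.
    nra.
  have /ler_normlP [hk1 hk2] := lip k.
  have /ler_normlP [hj1 hj2] := lip j.
  rewrite split_q in hq.
  rewrite -/a -/b in hk1 hk2 hj1 hj2.
  set tk := tau q k in hk1 hk2 hq; set tj := tau q j in hj1 hj2 hq.
  set D := L' * (ep + dl) in hk1 hk2 hj1 hj2.
  have f1 : 4 * L' * dl = a by rewrite /dl; field; apply/eqP; lra.
  have f2 : 4 * (a + b) * ep = dl * a by rewrite /ep; field; apply/eqP; lra.
  have f3 : 4 * ep <= dl.
    have : 4 * (a + b) * ep <= dl * (a + b) by rewrite f2; nra.
    by move=> h; nra.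
  have f4 : D <= 5 / 16 * a by rewrite /D; nra.
  have f5 : ep * tk <= dl * a / 4.
    have : ep * tk <= ep * (a + b) by rewrite ler_pM2l //; lra.
    by move=> h; nra.
  have f6 : dl * (11 / 16 * a) <= dl * tj by rewrite ler_pM2l //; lra.
  have := mulr_gt0 dl0 ha; nra.
move=> s u; rewrite /frg hrhE /= -mulr_suml -/T.
have [T0'|Tpos] : T = 0 \/ 0 < T by move: T0; rewrite le0r => /orP[/eqP|]; auto.
  have tz w : tau p w = 0.
    exact: (@psumr_eq0P _ _ predT (fun w => tau p w) (fun w _ => tau0 p w) T0' w isT).
  by rewrite tz T0' !mulr0 subrr.
case: (pickP (fun w => 0 < tau p w)) => [j hj|hnone]; last first.
  have : T <= 0 by apply: sumr_le0 => w _; rewrite leNgt hnone.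
  by rewrite leNgt Tpos.
have tk w : w != j -> tau p w = 0.
  move=> wj; apply/eqP; rewrite eq_le tau0 andbT leNgt; apply/negP => hw.
  exact: conc wj hw hj.
have xk w : w != j -> x w = 0.
  move=> wj; have := aggE w; rewrite tk // mulr0 => /esym/eqP.
  by rewrite mulf_eq0 (gt_eqF Tpos) orbF => /eqP.
have Tj : T = tau p j.
  by rewrite /T (bigD1 j) //= big1 ?addr0 // => w /tk.
have smu : \sum_u' mu s u' = mu s j.
  by rewrite (bigD1 j) //= big1 ?addr0 // => w /xk /(mu0 s).
rewrite smu Tj; case: (eqVneq u j) => [->|uj]; first by rewrite mulrC subrr.
by rewrite tk // (mu0 s _ (xk _ uj)) mulr0 mul0r subrr.
Qed.
End B.
Section C.
Context {R : realType}.
Local Open Scope classical_set_scope.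

Lemma mono_deriv (f df : R -> R) (a b : R) : a <= b ->
  (forall t, a <= t <= b -> is_derive t 1 f (df t)) ->
  (forall t, a < t < b -> 0 <= df t) -> f a <= f b.
Proof.
move=> ab hd hpos; case: (eqVneq a b) => [->//|neq].
have ltab : a < b by rewrite lt_neqAle neq ab.
have cont : {within `[a, b], continuous f}.
  have hd' : {in `[a, b]%R, forall t, derivable f t 1}.
    by move=> t; rewrite in_itv /= => ht; have [] := hd t ht.
  exact: derivable_within_continuous hd'.
have hdo : forall t, t \in `]a, b[%R -> is_derive t 1 f (df t).
  by move=> t; rewrite in_itv /= => /andP[h1 h2]; apply: hd; rewrite !ltW.
have [c hc] := MVT ltab hdo cont.
move/eqP; rewrite subr_eq => /eqP ->.
rewrite lerDr mulr_ge0 ?subr_ge0 //.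
by apply: hpos; move: hc; rewrite in_itv.
Qed.

Lemma deriv_lb (f df : R -> R) (a b L : R) : a <= b ->
  (forall t, a <= t <= b -> is_derive t 1 f (df t)) ->
  (forall t, a < t < b -> L <= df t) -> L * (b - a) <= f b - f a.
Proof.
move=> ab hd hpos; case: (eqVneq a b) => [->|neq]; first by rewrite !subrr mulr0.
have ltab : a < b by rewrite lt_neqAle neq ab.
have cont : {within `[a, b], continuous f}.
  have hd' : {in `[a, b]%R, forall t, derivable f t 1}.
    by move=> t; rewrite in_itv /= => ht; have [] := hd t ht.
  exact: derivable_within_continuous hd'.
have hdo : forall t, t \in `]a, b[%R -> is_derive t 1 f (df t).
  by move=> t; rewrite in_itv /= => /andP[h1 h2]; apply: hd; rewrite !ltW.
have [c hc ->] := MVT ltab hdo cont.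
rewrite ler_wpM2r ?subr_ge0 //.
by apply: hpos; move: hc; rewrite in_itv.
Qed.

Lemma is_derive_sum_seq (I : Type) (r : seq I) (f : I -> R -> R) (df : I -> R) (t : R) :
  (forall i, is_derive t (1:R) (f i) (df i)) ->
  is_derive t (1:R) (fun r0 => \sum_(i <- r) f i r0) (\sum_(i <- r) df i).
Proof.
move=> hd; elim: r => [|i r IH].
  have -> : (fun r0 : R => \sum_(i <- [::]) f i r0) = cst 0.
    by apply/funext => r0; rewrite big_nil.
  rewrite big_nil; exact: is_derive_cst.
have -> : (fun r0 : R => \sum_(j <- i :: r) f j r0) =
    f i + (fun r0 => \sum_(j <- r) f j r0).
  by apply/funext => r0; rewrite big_cons.
rewrite big_cons; exact: is_deriveD.
Qed.

Lemma is_derive_lin (B t : R) : is_derive t 1 (fun r : R => B * r) B.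
Proof.
have := is_deriveZ B (is_derive_id t (1 : R)).
have -> : B *: (1 : R) = B by rewrite /GRing.scale /= mulr1.
by [].
Qed.

Lemma mvt_bound (f : R -> R) (a b P : R) : a <= b ->
  (forall h, a <= h <= b -> derivable f h 1 /\ `|'D_1 f h| <= P) ->
  `|f b - f a| <= P * (b - a).
Proof.
move=> ab hd.
have cont : {within `[a, b], continuous f}.
  have hd' : {in `[a, b]%R, forall t, derivable f t 1}.
    by move=> t; rewrite in_itv /= => ht; have [] := hd t ht.
  exact: derivable_within_continuous hd'.
have hdo : forall t, t \in `]a, b[%R -> is_derive t 1 f ('D_1 f t).
  move=> t; rewrite in_itv /= => /andP[h1 h2]; apply: derivableP.
  have ht : a <= t <= b by rewrite !ltW.
  by case: (hd t ht).
have [c hc ->] := @MVT_segment R f (fun h => 'D_1 f h) a b ab hdo cont.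
have ab' : 0 <= b - a by rewrite subr_ge0.
rewrite normrM (ger0_norm ab') ler_wpM2r //.
by move: hc; rewrite in_itv /= => hc; case: (hd c hc).
Qed.


Lemma mvt_abs (f : R -> R) (D P : R) :
  (forall h, `|h| <= `|D| -> derivable f h 1 /\ `|'D_1 f h| <= P) ->
  `|f D - f 0| <= P * `|D|.
Proof.
move=> hd; case: (leP 0 D) => hD.
  rewrite (ger0_norm hD) -[X in P * X]subr0; apply: mvt_bound => // h /andP[h1 h2].
  by apply: hd; rewrite (ger0_norm hD) (ger0_norm h1).
rewrite distrC (ltr0_norm hD) -[X in P * X]sub0r; apply: mvt_bound; first exact: ltW.
move=> h /andP[h1 h2]; apply: hd; rewrite (ltr0_norm hD).
by rewrite ler_norml; apply/andP; split; lra.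
Qed.

Lemma derive_shift_eq (G : R -> R) (h : R) :
  (fun t : R => t^-1 *: (((fun k => G (k + h)) \o shift 0) (t *: 1) - G (0 + h))) =
  (fun t : R => t^-1 *: ((G \o shift h) (t *: 1) - G h)).
Proof. by apply/funext => t /=; rewrite addr0 add0r. Qed.

Lemma derivable_shift (G : R -> R) (h : R) :
  derivable (fun k => G (k + h)) 0 1 -> derivable G h 1.
Proof. by rewrite /derivable derive_shift_eq. Qed.

Lemma derive_shift (G : R -> R) (h : R) :
  'D_1 (fun k => G (k + h)) 0 = 'D_1 G h.
Proof. by rewrite /derive derive_shift_eq. Qed.

End C.
Section D.
Context {R : realType} (M : model R).

Definition contat (G : state M -> R) (mu : state M) :=
  forall e, 0 < e -> exists d, 0 < d /\
    forall nu, Defs.close M nu mu d -> `|G nu - G mu| < e.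

Lemma close_mono (nu mu : state M) d d' : d <= d' -> Defs.close M nu mu d -> Defs.close M nu mu d'.
Proof. by move=> h hc i; apply: lt_le_trans (hc i) h. Qed.

Lemma close_min (nu mu : state M) d1 d2 :
  Defs.close M nu mu (Num.min d1 d2) -> Defs.close M nu mu d1 /\ Defs.close M nu mu d2.
Proof. by move=> h; split=> i; have := h i; rewrite lt_min => /andP[]. Qed.

Lemma cont_cst (c : R) mu : contat (fun _ => c) mu.
Proof. by move=> e he; exists 1; split=> // nu _; rewrite subrr normr0. Qed.

Lemma cont_coord i mu : contat (fun nu => nu i) mu.
Proof. by move=> e he; exists e; split=> // nu hc; apply: hc. Qed.

Lemma cont_add G1 G2 mu : contat G1 mu -> contat G2 mu ->
  contat (fun nu => G1 nu + G2 nu) mu.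
Proof.
move=> h1 h2 e he.
have he2 : 0 < e / 2 by apply: divr_gt0.
have [d1 [d10 hd1]] := h1 _ he2; have [d2 [d20 hd2]] := h2 _ he2.
exists (Num.min d1 d2); split; first by rewrite lt_min d10 d20.
move=> nu /close_min [c1 c2].
have := hd1 _ c1; have := hd2 _ c2 => a1 a2.
have -> : G1 nu + G2 nu - (G1 mu + G2 mu) = (G1 nu - G1 mu) + (G2 nu - G2 mu) by ring.
apply: le_lt_trans (ler_normD _ _) _; lra.
Qed.

Lemma cont_lip (f : R -> R) K G mu :
  (forall a b, `|f a - f b| <= K * `|a - b|) -> contat G mu ->
  contat (fun nu => f (G nu)) mu.
Proof.
move=> hf hG e he.
have K0 : 0 < `|K| + 1 by apply: (le_lt_trans (normr_ge0 K)); rewrite ltrDl ltr01.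
have he' : 0 < e / (`|K| + 1) by apply: divr_gt0.
have [d [d0 hd]] := hG _ he'; exists d; split=> // nu hc.
apply: le_lt_trans (hf _ _) _.
have h1 := hd _ hc.
have h2 : K * `|G nu - G mu| <= (`|K| + 1) * `|G nu - G mu|.
  by apply: ler_wpM2r; [exact: normr_ge0 | apply: le_trans (ler_norm K) _; rewrite lerDl].
apply: le_lt_trans h2 _.
by rewrite -ltr_pdivlMl // mulrC.
Qed.

Lemma cont_mul G1 G2 mu : contat G1 mu -> contat G2 mu ->
  contat (fun nu => G1 nu * G2 nu) mu.
Proof.
move=> h1 h2 e he.
set A := `|G1 mu|; set B := `|G2 mu|.
have A0 : 0 <= A by apply: normr_ge0.
have B0 : 0 <= B by apply: normr_ge0.
set eta := Num.min 1 (e / (2 * (1 + A + B))).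
have eta0 : 0 < eta.
  by rewrite lt_min ltr01 /=; apply: divr_gt0 => //; apply: mulr_gt0 => //; lra.
have eta1 : eta <= 1 by rewrite /eta ge_min lexx.
have eta2 : eta * (1 + A + B) <= e / 2.
  have : eta <= e / (2 * (1 + A + B)) by rewrite /eta ge_min lexx orbT.
  rewrite ler_pdivlMr; last by apply: mulr_gt0 => //; lra.
  by move=> h; rewrite ler_pdivlMr //; lra.
have [d1 [d10 hd1]] := h1 _ eta0; have [d2 [d20 hd2]] := h2 _ eta0.
exists (Num.min d1 d2); split; first by rewrite lt_min d10 d20.
move=> nu /close_min [c1 c2].
have a1 := hd1 _ c1; have a2 := hd2 _ c2.
set a := G1 nu - G1 mu in a1; set b := G2 nu - G2 mu in a2.
have -> : G1 nu * G2 nu - G1 mu * G2 mu = a * b + G1 mu * b + G2 mu * a.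
  by rewrite /a /b; ring.
apply: le_lt_trans (ler_normD _ _) _.
rewrite -/A -/B.
have hab : `|a * b| <= eta.
  rewrite normrM; have := normr_ge0 a; have := normr_ge0 b; nra.
have hA : `|G1 mu * b| <= A * eta.
  by rewrite normrM -/A ler_wpM2l // ltW.
have hB : `|G2 mu * a| <= B * eta.
  by rewrite normrM -/B ler_wpM2l // ltW.
have := ler_normD (a * b) (G1 mu * b).
lra.
Qed.

Lemma cont_sum (I : Type) (r : seq I) (G : I -> state M -> R) mu :
  (forall i, contat (G i) mu) -> contat (fun nu => \sum_(i <- r) G i nu) mu.
Proof.
move=> h; elim: r => [|i r IH].
  by under [X in contat X _]funext do rewrite big_nil; apply: cont_cst.
under [X in contat X _]funext do rewrite big_cons.
exact: cont_add.
Qed.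

End D.
Section E.
Context {R : realType} (M : model R).

Lemma fin_min (T : finType) (f : T -> R) (d0 : R) : 0 < d0 ->
  (forall i, 0 < f i) -> exists D, 0 < D /\ D <= d0 /\ forall i, D <= f i.
Proof.
move=> d00 hf.
suff [D [D0 [Dd hD]]] : exists D, 0 < D /\ D <= d0 /\ forall i, i \in enum T -> D <= f i.
  by exists D; split=> //; split=> // i; apply: hD; rewrite mem_enum.
elim: (enum T) => [|i l [D [D0 [Dd hD]]]]; first by exists d0; split=> //; split.
exists (Num.min (f i) D); split; first by rewrite lt_min hf D0.
split; first by apply: le_trans Dd; rewrite ge_min lexx orbT.
move=> j; rewrite in_cons => /orP[/eqP->|hj]; first by rewrite ge_min lexx.
by rewrite ge_min hD // orbT.
Qed.

Lemma shift0 (p : state M) i : Defs.shift M p i 0 = p.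
Proof. by apply/funext => j; rewrite /Defs.shift mul0r addr0. Qed.

Lemma shift_shift (p : state M) i h k :
  Defs.shift M (Defs.shift M p i h) i k = Defs.shift M p i (k + h).
Proof. by apply/funext => j; rewrite /Defs.shift; ring. Qed.

Lemma C1_cont (O : state M -> Prop) (G : state M -> R) mu :
  open_set M O -> O mu -> C1_on M O G -> contat M G mu.
Proof.
move=> hO Omu hC.
have [d0 [d00 hd0]] := hO mu Omu.
have hex : forall i, exists d, 0 < d /\ forall nu, O nu -> Defs.close M nu mu d ->
    `|partial M G nu i - partial M G mu i| < 1.
  by move=> i; have [_ h2] := hC i; apply: h2 => //; apply: ltr01.
case: (choice hex) => dd hdd.
have [D [D0 [Dd0 Ddd]]] := @fin_min _ dd d0 d00 (fun i => proj1 (hdd i)).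
set P := fun i => `|partial M G mu i| + 1.
have P0 i : 0 <= P i by rewrite /P; apply: addr_ge0 => //; apply: ler01.
have key : forall nu, Defs.close M nu mu D -> forall l, uniq l ->
    `|G (fun j => if j \in l then nu j else mu j) - G mu| <=
    \sum_(i <- l) P i * `|nu i - mu i|.
  move=> nu hnu; elim=> [|i l IH] /=.
    move=> _; rewrite big_nil.
    have -> : (fun j => if j \in [::] then nu j else mu j) = mu by apply/funext.
    by rewrite subrr normr0.
  move=> /andP[il ul]; rewrite big_cons.
  set ml := fun j => if j \in l then nu j else mu j.
  have -> : (fun j => if j \in i :: l then nu j else mu j) =
            Defs.shift M ml i (nu i - mu i).
    apply/funext => j; rewrite /Defs.shift /ml in_cons.
    case: (eqVneq j i) => [->|ji] /=; last by rewrite mulr0 addr0.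
    by rewrite (negbTE il) mulr1 addrC subrK.
  set f := fun h => G (Defs.shift M ml i h).
  have hf : `|f (nu i - mu i) - f 0| <= P i * `|nu i - mu i|.
    apply: mvt_abs => h hh.
    set p' := Defs.shift M ml i h.
    have cp' : Defs.close M p' mu D.
      move=> j; rewrite /p' /Defs.shift /ml.
      case: (eqVneq j i) => [->|ji].
        rewrite (negbTE il) mulr1 addrC addKr; apply: le_lt_trans hh _; exact: hnu.
      rewrite mulr0 addr0; case: (j \in l); first exact: hnu.
      by rewrite subrr normr0.
    have Op' : O p' by apply: hd0; apply: close_mono cp'.
    have eqf : (fun k => G (Defs.shift M p' i k)) = (fun k => f (k + h)).
      by apply/funext => k; rewrite /f /p' shift_shift.
    have [hder _] := hC i.
    have dp := hder p' Op'; rewrite eqf in dp.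
    split; first exact: derivable_shift.
    rewrite -derive_shift -eqf -/(partial M G p' i).
    have := proj2 (hdd i) p' Op' (@close_mono _ M _ _ _ _ (Ddd i) cp').
    have := ler_normD (partial M G mu i) (partial M G p' i - partial M G mu i).
    rewrite addrC subrK /P => h1 h2; lra.
  rewrite /f shift0 in hf.
  apply: le_trans (ler_distD (G ml) _ _) _.
  by rewrite lerD // IH.
set S := \sum_(i <- enum (Idx (St M) (Pol M))) P i.
have S0 : 0 <= S by apply: sumr_ge0 => i _.
move=> e he.
have hd : 0 < e / (S + 1) by apply: divr_gt0 => //; lra.
exists (Num.min D (e / (S + 1))); split; first by rewrite lt_min D0 hd.
move=> nu /(close_min M) [c1 c2].
have hmix : forall l : seq (Idx (St M) (Pol M)), (forall j, j \in l) ->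
    (fun j => if j \in l then nu j else mu j) = nu.
  by move=> l hl; apply/funext => j; rewrite hl.
have := key nu c1 _ (enum_uniq (Idx (St M) (Pol M))).
rewrite hmix; last by move=> j; rewrite mem_enum.
move=> h; apply: le_lt_trans h _.
apply: (@le_lt_trans _ _ (S * (e / (S + 1)))).
  rewrite /S mulr_suml; apply: ler_sum => i _; apply: ler_wpM2l => //.
  exact/ltW/c2.
rewrite mulrA ltr_pdivrMr; last lra.
nra.
Qed.

End E.
Section F.
Context {R : realType} (M : model R).

Lemma field_eq (mu : state M) c (s : St M c) (u : Pol M c) :
  field M mu (idx M s u) = fd M mu s u + fr M mu s u.
Proof. by []. Qed.

Lemma sum_field (mu : state M) c (u : Pol M c) : standing M ->
  \sum_(s : St M c) field M mu (idx M s u) = \sum_(s : St M c) fr M mu s u.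
Proof.
move=> [_ [_ [hphi _]]].
under eq_bigr do rewrite field_eq.
by rewrite big_split /= sum_fd ?add0r //; apply: hphi.
Qed.

Definition nash_c (mu : state M) c := forall u : Pol M c,
  0 < polmass M mu c u -> forall v, F M c mu v <= F M c mu u.

Lemma class_rest (mu : state M) c : standing M -> revision_protocol (rho M c) ->
  (imitative_via_comparison (mass M c) (rho M c) \/
   excess_payoff (mass M c) (rho M c) \/ pairwise_comparison (rho M c)) ->
  rest_point M mu ->
  (forall (s : St M c) (u : Pol M c), fr M mu s u = 0) /\
  (nash_c mu c \/ (imitative_via_comparison (mass M c) (rho M c) /\
     forall u u', 0 < polmass M mu c u -> 0 < polmass M mu c u' ->
        F M c mu u = F M c mu u')).
Proof.
move=> hst [_ hrp0] hfam [hX hf].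
have m0 : 0 < mass M c by case: hst => _ [_ [_ [_ [h _]]]]; apply: h.
have [pd0 pdsum] := polmass_pdist M mu c hX.
have agg u : \sum_u' polmass M mu c u' *
      rho M c (F M c mu) (polmass M mu c) u' u -
    polmass M mu c u * \sum_u' rho M c (F M c mu) (polmass M mu c) u u' = 0.
  rewrite -sum_fr -sum_field //; apply: big1 => s _; exact: hf.
have mu0 : forall (s : St M c) u, 0 <= mu_at M mu s u by move=> s u; case: hX => h _; apply: h.
have mule : forall (s : St M c) u, mu_at M mu s u <= polmass M mu c u.
  by move=> s u; apply: (mu_le_polmass M).
case: hfam => [hi|[he|hp]].
- have hi' := hi; case: hi => vp [_ [vp0 [vpP [_ [_ [hform _]]]]]].
  have := @imit_gen R (St M c) (Pol M c) (mass M c) (fun s u => mu_at M mu s u)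
    (polmass M mu c) (F M c mu) (rho M c (F M c mu) (polmass M mu c))
    m0 mu0 mule pd0 pdsum agg vp vp0 vpP.
  case=> [u' u|heq hfr]; first by rewrite hform //; split.
  by split=> //; right.
- case: he => tau [hL [t0 [hac hform]]].
  have := @excess_gen R (St M c) (Pol M c) (mass M c) (fun s u => mu_at M mu s u)
    (polmass M mu c) (F M c mu) (rho M c (F M c mu) (polmass M mu c))
    m0 mu0 mule pd0 pdsum agg tau hL t0 hac.
  case=> [u v|hn hfr]; first by rewrite hform //; split.
  by split=> //; left.
- case: hp => _ hiff.
  have := @pairwise_gen R (St M c) (Pol M c) (fun s u => mu_at M mu s u)
    (polmass M mu c) (F M c mu) (rho M c (F M c mu) (polmass M mu c))
    mu0 mule pd0 agg (hrp0 _ _ pd0) (hiff _ _ pd0).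
  by case=> hn hfr; split=> //; left.
Qed.

End F.
Section G.
Context {R : realType} (M : model R) (c : 'I_(C M)) (vp : R -> R) (v : Pol M c).
Hypothesis hst : standing M.
Hypothesis hform : forall pi x, pdist (mass M c) x -> forall u w,
  rho M c pi x u w = x w / mass M c * vp (pi w - pi u).
Hypothesis vp0 : forall d, d <= 0 -> vp d = 0.
Hypothesis hrp : revision_protocol (rho M c).

Definition hfun (nu : state M) := (mass M c)^-1 *
  \sum_(u' : Pol M c) polmass M nu c u' *
     (vp (F M c nu v - F M c nu u') - vp (F M c nu u' - F M c nu v)).

Lemma agg_imit (nu : state M) : inX M nu ->
  \sum_(s : St M c) field M nu (idx M s v) = polmass M nu c v * hfun nu.
Proof.
move=> hX; rewrite sum_field // sum_fr.
have pd := polmass_pdist M nu c hX.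
rewrite /hfun mulrA mulr_sumr mulr_sumr -sumrB; apply: eq_bigr => u' _.
rewrite !hform //; ring.
Qed.

Lemma X_deriv (x : R -> state M) (t : R) : solution M x -> 0 < t ->
  is_derive t (1:R) (fun r => polmass M (x r) c v)
    (polmass M (x t) c v * hfun (x t)).
Proof.
move=> [hX [hd _]] t0.
rewrite -agg_imit; last exact: hX (ltW t0).
rewrite /polmass /mu_at.
apply: (@is_derive_sum_seq R (St M c) _ (fun s r => x r (idx M s v))) => s.
exact: hd.
Qed.

Lemma X_lb : exists B, 0 <= B /\ forall nu : state M, inX M nu ->
  - (B * polmass M nu c v) <= polmass M nu c v * hfun nu.
Proof.
case: hrp => [[L hL] hr0].
have m0 : 0 < mass M c by case: hst => _ [_ [_ [_ [h _]]]]; apply: h.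
exists (#|Pol M c|%:R * (`|L| * (2 * mass M c))); split.
  by apply: mulr_ge0 => //; apply: mulr_ge0 => //; apply: mulr_ge0 => //; lra.
move=> nu hX.
have pd := polmass_pdist M nu c hX.
rewrite -agg_imit // sum_field // sum_fr.
set x := polmass M nu c; set pi := F M c nu.
set e := fun w : Pol M c => mass M c * (w == v)%:R.
have pde : pdist (mass M c) e.
  split; first by move=> w; rewrite /e mulr_ge0 //; lra.
  rewrite /e -mulr_sumr (bigD1 v) //= eqxx big1 ?addr0 ?mulr1 // => w /negbTE ->.
  by [].
have [x0 xsum] := pd.
have t1 : 0 <= \sum_u' x u' * rho M c pi x u' v.
  by apply: sumr_ge0 => u' _; apply: mulr_ge0; [apply: x0|apply: hr0].
have rhoe u' : rho M c pi e v u' = 0.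
  rewrite hform // /e; case: (eqVneq u' v) => [->|ne].
    by rewrite subrr vp0 // mulr0.
  by rewrite mulr0 mul0r mul0r.
have l1pp : l1dist pi pi = 0 by rewrite /l1dist big1 // => w _; rewrite subrr normr0.
have l1xe : l1dist x e <= 2 * mass M c.
  apply: (@le_trans _ _ (\sum_w (x w + e w))).
    apply: ler_sum => w _; apply: le_trans (ler_normB _ _) _.
    by rewrite (ger0_norm (x0 w)) (ger0_norm ((proj1 pde) w)).
  by rewrite big_split /= xsum (proj2 pde); lra.
have l1ge : 0 <= l1dist x e by apply: sumr_ge0 => w _.
have rb u' : rho M c pi x v u' <= `|L| * (2 * mass M c).
  have h := hL pi pi x e x0 (proj1 pde) v u'.
  rewrite rhoe subr0 l1pp add0r in h.
  apply: le_trans (ler_norm _) _; apply: le_trans h _.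
  apply: le_trans (_ : `|L| * l1dist x e <= _).
    by apply: ler_wpM2r => //; apply: ler_norm.
  by apply: ler_wpM2l.
have sb : \sum_u' rho M c pi x v u' <= #|Pol M c|%:R * (`|L| * (2 * mass M c)).
  apply: le_trans (ler_sum _ (fun u' _ => rb u')) _.
  by rewrite sumr_const cardT -cardE [X in _ <= X]mulr_natl.
have xv0 : 0 <= x v := x0 v.
have := ler_wpM2l xv0 sb.
lra.
Qed.


Lemma growth (x : R -> state M) (a K Bd : R) : solution M x -> 0 < a -> 0 < K ->
  (forall t, a <= t -> K <= hfun (x t)) ->
  (forall t, a <= t -> polmass M (x t) c v <= Bd) ->
  0 < polmass M (x a) c v -> False.
Proof.
move=> hsol a0 K0 hK hB Xa0.
set X := fun r => polmass M (x r) c v.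
have X0 t : 0 <= t -> 0 <= X t.
  by move=> t0; apply: polmass_ge0; case: hsol => h _; apply: h.
have hd t : a <= t -> is_derive t (1:R) X (X t * hfun (x t)).
  by move=> at0; apply: X_deriv => //; apply: lt_le_trans at0.
have mono t : a <= t -> X a <= X t.
  move=> at0; have := @deriv_lb _ X (fun r => X r * hfun (x r)) a t 0 at0.
  rewrite mul0r subr_ge0; apply.
    by move=> s /andP[h1 h2]; apply: hd.
  move=> s /andP[h1 h2]; apply: mulr_ge0; first by apply: X0; lra.
  by apply: le_trans (ltW K0) _; apply: hK; apply: ltW.
have lin t : a <= t -> K * X a * (t - a) <= X t - X a.
  move=> at0; apply: (@deriv_lb _ X (fun r => X r * hfun (x r))) => //.
    by move=> s /andP[h1 h2]; apply: hd.
  move=> s /andP[h1 h2].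
  have m1 := mono s (ltW h1); have k1 := hK s (ltW h1).
  have := X0 a (ltW a0); nra.
have XaB : X a <= Bd by apply: hB.
set t := a + (Bd - X a + 1) / (K * X a).
have KX : 0 < K * X a by apply: mulr_gt0.
have ta : a <= t.
  rewrite /t lerDl; apply: divr_ge0; [lra|exact: ltW].
have := lin t ta; have := hB t ta.
have -> : K * X a * (t - a) = Bd - X a + 1.
  by rewrite /t addrC addKr mulrC divfK // gt_eqF.
rewrite -/(X t); lra.
Qed.

Lemma X_pos (x : R -> state M) (a0 B : R) : solution M x -> 0 < a0 -> 0 <= B ->
  (forall nu : state M, inX M nu ->
     - (B * polmass M nu c v) <= polmass M nu c v * hfun nu) ->
  0 < polmass M (x a0) c v -> forall t, a0 <= t -> 0 < polmass M (x t) c v.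
Proof.
move=> hsol a00 B0 hlb Xa0 t at0.
set X := fun r => polmass M (x r) c v.
set E := fun r : R => expR (B * r).
have hE r : is_derive r (1:R) E (expR (B * r) * B).
  exact: (@is_derive1_comp R expR (fun r => B * r) r _ B (is_derive_expR _) (is_derive_lin B r)).
have hd (r : R) : 0 < r -> is_derive r (1:R) (X * E)
    (X r *: (expR (B * r) * B) + E r *: (X r * hfun (x r))).
  move=> r0; have h1 := X_deriv x r hsol r0; have h2 := hE r.
  exact: is_deriveM h1 h2.
have := @deriv_lb _ (X * E) (fun r => X r *: (expR (B * r) * B) + E r *: (X r * hfun (x r)))
  a0 t 0 at0.
rewrite mul0r subr_ge0 => h.
have : (X * E) a0 <= (X * E) t.
  apply: h; first by move=> s /andP[h1 h2]; apply: hd; lra.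
  move=> s /andP[h1 h2].
  have := hlb (x s) (proj1 hsol s (ltW (lt_trans a00 h1))).
  rewrite /GRing.scale /= /E -/(X s).
  have := expR_gt0 (B * s).
  move=> e0 h3; nra.
rewrite /= /E => h2.
have : 0 < X t * expR (B * t).
  apply: lt_le_trans h2; apply: mulr_gt0 => //; exact: expR_gt0.
by rewrite pmulr_lgt0 // expR_gt0.
Qed.

End G.
Section H.
Context {R : realType} (M : model R).

Lemma sum_idx_eq c' c (s0 : St M c) (u0 : Pol M c) :
  \sum_(s : St M c') \sum_(u : Pol M c') (idx M s u == idx M s0 u0)%:R =
  (c' == c)%:R :> R.
Proof.
have [e|ne] := eqVneq c' c; last first.
  rewrite big1 // => s _; rewrite big1 // => u _.
  case: eqP => // h; have e : c' = c := congr1 tag h.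
  by move: ne; rewrite e => /negP h'; exfalso; apply: h'; exact: eqxx.
subst c'.
under eq_bigr => s _ do under eq_bigr => u _ do
  rewrite (@eq_Tagged _ (fun c => SU (St M) (Pol M) c) (idx M s u) (s0, u0)) /=.
rewrite (bigD1 s0) //= [X in _ + X]big1 ?addr0; last first.
  by move=> s /negbTE hs; apply: big1 => u _; rewrite xpair_eqE hs.
rewrite (bigD1 u0) //= xpair_eqE !eqxx [X in _ + X]big1 ?addr0 //.
by move=> u /negbTE hu; rewrite xpair_eqE eqxx hu.
Qed.

End H.
Theorem theorem1 (R : realType) (M : model R) (mu_star : state M) :
  standing M ->
  well_posed M ->
  (forall c, revision_protocol (rho M c)) ->
  (forall c, imitative_via_comparison (mass M c) (rho M c) \/
             excess_payoff (mass M c) (rho M c) \/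
             pairwise_comparison (rho M c)) ->
  rest_point M mu_star ->
  ~ MSNE M mu_star ->
  ~ lyapunov_stable M mu_star /\
  (forall x : R -> state M, solution M x -> interiorX M (x 0) ->
     ~ converges_to M x mu_star).
Proof.
move=> hst hwp hrp hfam hrest hnot.
have [hX hf] := hrest.
have hcls c := class_rest M mu_star c hst (hrp c) (hfam c) hrest.
have [c hc] : exists c, ~ nash_c M mu_star c.
  apply: contrapT => hn; apply: hnot; split => // c; split.
    by apply: contrapT => h; apply: hn; exists c.
  move=> s u; have := hf (idx M s u); rewrite field_eq (proj1 (hcls c) s u) addr0.
  by [].
have [hfr0 [hn|[himit heq]]] := hcls c; first by [].
case: himit => vp [[Lv hLv] [vp0 [vpP [_ [_ [hform _]]]]]].
have m0 : 0 < mass M c by case: hst => _ [_ [_ [_ [h _]]]]; apply: h.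
set x := polmass M mu_star c.
set pi := F M c mu_star.
have [x0 xsum] := polmass_pdist M mu_star c hX.
have [u0 hu0 hw] : exists2 u, 0 < x u & ~ (forall v, pi v <= pi u).
  by apply/existsPNP => h; apply: hc => u hu; apply: h.
have [w0 hw0] : exists w, ~ (pi w <= pi u0) by apply/existsNP.
have hw0' : pi u0 < pi w0 by rewrite ltNge; apply/negP.
have [v _ hvmax] := @arg_maxP _ _ _ u0 predT pi isT.
have {}hvmax j : pi j <= pi v by exact: hvmax.
have xv0 : x v = 0.
  case: (@x_cases _ _ x x0 v) => // hxv.
  have := heq v u0 hxv hu0; have := hvmax w0; rewrite -/pi => h1 h2; lra.
have vpge0 d : 0 <= d -> 0 <= vp d.
  by rewrite le0r => /orP[/eqP->|/vpP/ltW//]; rewrite vp0.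
set K := hfun M c vp v mu_star.
have K0 : 0 < K.
  rewrite /K /hfun; apply: mulr_gt0; first by rewrite invr_gt0.
  rewrite (bigD1 u0) //=.
  have ha : 0 < polmass M mu_star c u0 *
      (vp (F M c mu_star v - F M c mu_star u0) - vp (F M c mu_star u0 - F M c mu_star v)).
    apply: mulr_gt0 => //.
    rewrite (vp0 (F M c mu_star u0 - F M c mu_star v)); last first.
      by rewrite subr_le0; apply: le_trans (ltW hw0') (hvmax w0).
    rewrite subr0; apply: vpP; rewrite subr_gt0; exact: lt_le_trans hw0' (hvmax w0).
  have hb : 0 <= \sum_(i | i != u0) polmass M mu_star c i *
      (vp (F M c mu_star v - F M c mu_star i) - vp (F M c mu_star i - F M c mu_star v)).
    apply: sumr_ge0 => i _; apply: mulr_ge0; first exact: x0.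
    rewrite (vp0 (F M c mu_star i - F M c mu_star v)); last by rewrite subr_le0 hvmax.
    by rewrite subr0 vpge0 // subr_ge0 hvmax.
  lra.
have [Os [hOo [hOX hC1]]] : F_C1_near_X M by case: hst => _ [_ [_ [_ [_ [_ [_ h]]]]]].
have hFc u : contat M (fun nu => F M c nu u) mu_star.
  exact: C1_cont hOo (hOX _ hX) (hC1 c u).
have hpm u : contat M (fun nu => polmass M nu c u) mu_star.
  exact: (@cont_sum R M _ (index_enum (St M c)) (fun s nu => nu (idx M s u)) mu_star
           (fun s => cont_coord M _ _)).
have hopp : forall a b : R, `|(fun z => - z) a - (fun z => - z) b| <= 1 * `|a - b|.
  by move=> a b /=; rewrite mul1r -opprD normrN.
have hdiff u1 u2 : contat M (fun nu => F M c nu u1 - F M c nu u2) mu_star.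
  exact: @cont_add _ M _ _ _ (hFc u1) (@cont_lip _ M (fun z => - z) 1 _ _ hopp (hFc u2)).
have hg u' : contat M (fun nu => vp (F M c nu v - F M c nu u') -
                                  vp (F M c nu u' - F M c nu v)) mu_star.
  exact: @cont_add _ M _ _ _ (@cont_lip _ M vp Lv _ _ hLv (hdiff v u'))
    (@cont_lip _ M (fun z => - z) 1 _ _ hopp (@cont_lip _ M vp Lv _ _ hLv (hdiff u' v))).
have hKc : contat M (fun nu => (mass M c)^-1 *
    \sum_(u' : Pol M c) polmass M nu c u' *
     (vp (F M c nu v - F M c nu u') - vp (F M c nu u' - F M c nu v))) mu_star.
  exact: @cont_mul _ M _ _ _ (cont_cst M _ _) (@cont_sum R M _ (index_enum (Pol M c)) _ mu_star
     (fun u' => @cont_mul _ M _ _ _ (hpm u') (hg u'))).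
have K20 : 0 < K / 2 by apply: divr_gt0.
have [dl [dl0 hdl]] := hKc _ K20.
have hKlow nu : Defs.close M nu mu_star dl -> K / 2 <= hfun M c vp v nu.
  move=> hc'; have h : `|hfun M c vp v nu - K| < K / 2 := hdl nu hc'.
  by move/ltr_normlP: h => [h1 h2]; lra.
have mv0 s : mu_at M mu_star s v = 0 by apply: (polmass0 M) => //.
have hBd nu : Defs.close M nu mu_star dl -> polmass M nu c v <= #|St M c|%:R * dl.
  move=> hc'; apply: (@le_trans _ _ (\sum_(s : St M c) dl)).
    apply: ler_sum => s _; have /ltr_normlP [h1 h2] := hc' (idx M s v).
    have := mv0 s; rewrite /mu_at => h3; rewrite h3 in h2; lra.
  by rewrite sumr_const cardT -cardE [X in _ <= X]mulr_natl.
have [B [B0 hB]] := X_lb M c vp v hst hform vp0 (hrp c).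
have [s0 hs0] : exists s0, 0 < mu_at M mu_star s0 u0.
  case: (pickP (fun s => 0 < mu_at M mu_star s u0)) => [s hs|hn]; first by exists s.
  have : x u0 <= 0 by apply: sumr_le0 => s _; rewrite leNgt hn.
  lra.
have vu0 : v != u0 by apply/eqP => e; move: hu0; rewrite -e -/x xv0 ltxx.
set iv := idx M s0 v; set iu := idx M s0 u0.
have ivu : (iv == iu) = false.
  rewrite /iv /iu (@eq_Tagged _ (fun c => SU (St M) (Pol M) c) (idx M s0 v) (s0, u0)) /=.
  by rewrite xpair_eqE eqxx (negbTE vu0).
have miv : mu_star iv = 0 by have := mv0 s0.
have hXt (xs : R -> state M) t : solution M xs -> 0 <= t -> inX M (xs t).
  by move=> [h _] t0; apply: h.
have Xge (xs : R -> state M) t : solution M xs -> 0 <= t ->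
    xs t iv <= polmass M (xs t) c v.
  by move=> hs t0; apply: (mu_le_polmass M (xs t) c s0 v); apply: hXt.
split.
  move=> hly; have [d [d0 hd]] := hly dl dl0.
  set eta := Num.min (mu_at M mu_star s0 u0) (d / 2).
  have d20 : 0 < d / 2 by apply: divr_gt0.
  have eta0 : 0 < eta by rewrite lt_min hs0 d20.
  have etale : eta <= mu_star iu by rewrite /eta ge_min lexx.
  have etad : eta < d.
    by apply: (@le_lt_trans _ _ (d / 2)); [rewrite /eta ge_min lexx orbT|lra].
  set mu0 := fun i => mu_star i + eta * ((i == iv)%:R - (i == iu)%:R).
  have mu0iv : mu0 iv = eta by rewrite /mu0 eqxx ivu miv /= mulr1n mulr0n; lra.
  have hX0 : inX M mu0.
    split.
      move=> i; rewrite /mu0; have := proj1 hX i.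
      case: (eqVneq i iu) => [->|ne2]; first by rewrite eq_sym ivu /= mulr1n mulr0n; lra.
      by rewrite /= mulr0n; case: (i == iv) => /=; rewrite ?mulr1n ?mulr0n; nra.
    move=> c'; rewrite /mu_at /mu0.
    under eq_bigr do rewrite big_split /=.
    rewrite big_split /= (proj2 hX c').
    under eq_bigr do rewrite -mulr_sumr sumrB.
    rewrite -mulr_sumr sumrB /iv /iu !sum_idx_eq subrr mulr0 addr0 //.
  have hcl0 : Defs.close M mu0 mu_star d.
    move=> i; rewrite /mu0 addrAC subrr add0r normrM (gtr0_norm eta0).
    case: (eqVneq i iu) => [->|ne2].
      by rewrite eq_sym ivu /= mulr1n mulr0n sub0r normrN normr1; lra.
    by rewrite /= mulr0n subr0; case: (i == iv); rewrite /= ?mulr1n ?mulr0n ?normr1 ?normr0; lra.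
  have [xs [hsol hx0]] := proj1 hwp mu0 hX0.
  have hstay := hd xs hsol (ltac:(by rewrite hx0)).
  have e20 : 0 < eta / 2 by apply: divr_gt0.
  have [d1 [d10 hd1]] := proj2 (proj2 hsol) _ e20.
  set a := d1 / 2.
  have a0 : 0 < a by apply: divr_gt0.
  have ad : a < d1 by rewrite /a; lra.
  have hxa := hd1 a (ltW a0) ad iv.
  rewrite hx0 mu0iv in hxa.
  have Xa : 0 < polmass M (xs a) c v.
    apply: lt_le_trans (Xge xs a hsol (ltW a0)).
    by move/ltr_normlP: hxa => [h1 h2]; lra.
  apply: (@growth _ M c vp v hst hform xs a (K / 2) (#|St M c|%:R * dl) hsol a0 K20 _ _ Xa).
    by move=> t ht; apply: hKlow; apply: hstay; lra.
  by move=> t ht; apply: hBd; apply: hstay; lra.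
move=> xs hsol hint hconv.
have xs0 : 0 < xs 0 iv by apply: (proj2 hint).
have e20 : 0 < xs 0 iv / 2 by apply: divr_gt0.
have [d1 [d10 hd1]] := proj2 (proj2 hsol) _ e20.
set a0 := d1 / 2.
have a00 : 0 < a0 by apply: divr_gt0.
have ad : a0 < d1 by rewrite /a0; lra.
have hxa := hd1 a0 (ltW a00) ad iv.
have Xa0 : 0 < polmass M (xs a0) c v.
  apply: lt_le_trans (Xge xs a0 hsol (ltW a00)).
  by move/ltr_normlP: hxa => [h1 h2]; lra.
have hpos := @X_pos _ M c vp v hst hform xs a0 B hsol a00 B0 hB Xa0.
have [T hT] := hconv dl dl0.
set a := Num.max T a0.
have aT : T <= a by rewrite /a le_max lexx.
have aa0 : a0 <= a by rewrite /a le_max lexx orbT.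
have a0' : 0 < a by lra.
apply: (@growth _ M c vp v hst hform xs a (K / 2) (#|St M c|%:R * dl) hsol a0' K20 _ _
  (hpos a aa0)).
  by move=> t ht; apply: hKlow; apply: hT; lra.
by move=> t ht; apply: hBd; apply: hT; lra.
Qed.
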